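(* Let $P$ be a finite poset and $I\in\mathcal{IC}(P)$. Then \[ \mathrm{Row}(I)=\mathrm{Inc}(I)\ \cup\ \Big(\Delta\big(\mathrm{Inc}_I(\lceil I\rceil)\big)-\big(I\cup\Delta(\lceil I\rceil)\big)\Big)\ \cup\ \Big(\Delta(\lceil I\rceil)-\Delta\big(\mathrm{Min}(I)\cap\Delta(\lceil I\rceil)\big)\Big). \]
   Context: All posets are finite. For a poset $P$, a subset $I\subseteq P$ is interval-closed if for all $x,y\in I$ and $z\in P$ with $x\le z\le y$ we have $z\in I$; $\mathcal{IC}(P)$ is the set of interval-closed subsets of $P$. For $x\in P$ the toggle $t_x:\mathcal{IC}(P)\to\mathcal{IC}(P)$ is defined by $t_x(I)=I\triangle\{x\}$ if $I\triangle\{x\}\in\mathcal{IC}(P)$ and $t_x(I)=I$ otherwise. Rowmotion is $\mathrm{Row}=t_{x_1}\circ t_{x_2}\circ\cdots\circ t_{x_N}:\mathcal{IC}(P)\to\mathcal{IC}(P)$, where $(x_1,\dots,x_N)$ is a linear extension of $P$ (so elements are toggled from the top of the poset down); this does not depend on the choice of linear extension. For $S\subseteq P$: $\Delta(S)$ is the smallest order ideal containing $S$ and $\nabla(S)$ the smallest order filter containing $S$ (both empty if $S=\emptyset$); $\mathrm{Inc}(S)=P-(\Delta(S)\cup\nabla(S))$ is the set of elements incomparable to every element of $S$; for $J\subseteq P$, $\mathrm{Inc}_J(S)=J\cap\mathrm{Inc}(S)$. $\mathrm{Min}(S)$ denotes the set of minimal elements of $S$ (in the induced order). The ceiling of $I\in\mathcal{IC}(P)$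 is $\lceil I\rceil=\mathrm{Min}(\nabla(I)-I)$. Set differences are written with $-$. *)

(* Defs.v *)
From mathcomp Require Import all_boot all_order.
Set Implicit Arguments. Unset Strict Implicit. Unset Printing Implicit Defensive.
Import Order.TTheory.
Local Open Scope order_scope.

Section Defs.
Context {d : Order.disp_t} {P : finPOrderType d}.

Definition interval_closed (I : {set P}) : bool :=
  [forall x in I, forall y in I, forall z, ((x <= z) && (z <= y)) ==> (z \in I)].

Definition symdiff1 (I : {set P}) (x : P) : {set P} :=
  if x \in I then I :\ x else x |: I.

Definition toggle (x : P) (I : {set P}) : {set P} :=
  if interval_closed (symdiff1 I x) then symdiff1 I x else I.

Definition linext (s : seq P) : Prop :=
  perm_eq s (enum P) /\ forall x y : P, x < y -> (index x s < index y s)%N.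

Definition Row (s : seq P) (I : {set P}) : {set P} := foldr toggle I s.

Definition down (S : {set P}) : {set P} := [set y | [exists x in S, y <= x]].
Definition up (S : {set P}) : {set P} := [set y | [exists x in S, x <= y]].
Definition Inc (S : {set P}) : {set P} := ~: (down S :|: up S).
Definition IncIn (J S : {set P}) : {set P} := J :&: Inc S.
Definition Min (S : {set P}) : {set P} := [set x in S | [forall y in S, ~~ (y < x)]].
Definition ceil (I : {set P}) : {set P} := Min (up I :\: I).

End Defs.

(* Main.v *)
Require Import Defs.
From mathcomp Require Import all_boot all_order.
Set Implicit Arguments. Unset Strict Implicit. Unset Printing Implicit Defensive.
Import Order.TTheory.
Local Open Scope order_scope.

Section S.
Context {d : Order.disp_t} {P : finPOrderType d}.
Implicit Types (S T : {set P}) (x y z : P).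

Lemma downP S y : reflect (exists2 x, x \in S & y <= x) (y \in down S).
Proof. rewrite /down in_set; apply: (iffP existsP) => [[x /andP[? ?]]|[x ? ?]]; exists x => //; exact/andP. Qed.
Lemma upP S y : reflect (exists2 x, x \in S & x <= y) (y \in up S).
Proof. rewrite /up in_set; apply: (iffP existsP) => [[x /andP[? ?]]|[x ? ?]]; exists x => //; exact/andP. Qed.
Lemma MinE S x : (x \in Min S) = (x \in S) && [forall y in S, ~~ (y < x)].
Proof. by rewrite /Min in_set. Qed.
Lemma ICP T : reflect (forall a b z, a \in T -> b \in T -> a <= z -> z <= b -> z \in T) (interval_closed T).
Proof.
apply: (iffP forallP) => [H a b z Ha Hb Haz Hzb | H a].
- move: (H a); rewrite Ha /= => /forallP /(_ b); rewrite Hb /= => /forallP /(_ z).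
  by rewrite Haz Hzb.
- apply/implyP => Ha; apply/forallP => b; apply/implyP => Hb; apply/forallP => z.
  apply/implyP => /andP[]; exact: H.
Qed.

Lemma MinP S x : x \in Min S -> x \in S /\ forall y, y \in S -> ~~ (y < x).
Proof. rewrite MinE => /andP[-> /forallP H]; split=> // y Hy; exact: (implyP (H y)). Qed.

Lemma IC_del T x : interval_closed T ->
  interval_closed (T :\ x) = ~~ [exists a, exists b, [&& a \in T, b \in T, a < x & x < b]].
Proof.
move=> /ICP HT; apply/idP/idP.
- move=> /ICP H; apply/negP => /existsP[a /existsP[b /and4P[Ha Hb Hax Hxb]]].
  have: x \in T :\ x.
    apply: (H a b); rewrite ?in_setD1 ?Ha ?Hb ?ltW //.
    + by rewrite andbT; apply/eqP => E; rewrite E ltxx in Hax.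
    + by rewrite andbT; apply/eqP => E; rewrite E ltxx in Hxb.
  by rewrite in_setD1 eqxx.
- move=> /negP N; apply/ICP => a b z; rewrite !in_setD1 => /andP[a' Ha] /andP[b' Hb] Haz Hzb.
  rewrite (HT a b z) // andbT; apply/eqP => E; subst z; apply: N.
  apply/existsP; exists a; apply/existsP; exists b.
  by rewrite !lt_neqAle Haz Hzb Ha Hb ?(eq_sym x a) ?(eq_sym x b) a' b'.
Qed.

Lemma IC_add T x : interval_closed T ->
  (interval_closed (x |: T) <->
   (forall a z, a \in T -> a < z -> z < x -> z \in T) /\
   (forall b z, b \in T -> x < z -> z < b -> z \in T)).
Proof.
move=> /ICP HT; split.
- move=> /ICP H; split.
  + move=> a z Ha Haz Hzx.
    have: z \in x |: T by apply: (H a x); rewrite ?in_setU1 ?eqxx ?Ha ?orbT ?ltW.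
    rewrite in_setU1 => /orP[/eqP E|//]; by rewrite E ltxx in Hzx.
  + move=> b z Hb Hxz Hzb.
    have: z \in x |: T by apply: (H x b); rewrite ?in_setU1 ?eqxx ?Hb ?orbT ?ltW.
    rewrite in_setU1 => /orP[/eqP E|//]; by rewrite E ltxx in Hxz.
- move=> [H1 H2]; apply/ICP => p q z; rewrite !in_setU1.
  case: (eqVneq z x) => [->|zx]; first by [].  
  move=> /orP[/eqP->|Hp] /orP[/eqP->|Hq] Hpz Hzq /=.
  + by move: zx; rewrite (@le_anti _ _ z x) ?eqxx // Hpz Hzq.
  + move: Hzq; rewrite le_eqVlt => /orP[/eqP->//|Hzq].
    by apply: (H2 q) => //; rewrite lt_neqAle eq_sym zx.
  + move: Hpz; rewrite le_eqVlt => /orP[/eqP<-//|Hpz].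
    by apply: (H1 p) => //; rewrite lt_neqAle zx.
  + exact: (HT p q).
Qed.

Section J.
Variable I : {set P}.
Hypothesis HI : interval_closed I.

Definition C := ceil I.
Definition M := Min I :&: down C.
Definition Jp := locked [set y | if y \in I then (y \in down C) && (y \notin Min I)
   else if y \in up I then y \in C else if y \in down I then y \notin down M else true].

Lemma JpE y : (y \in Jp) = (if y \in I then (y \in down C) && (y \notin Min I)
   else if y \in up I then y \in C else if y \in down I then y \notin down M else true).
Proof. by rewrite /Jp -lock in_set. Qed.

Lemma updown y : y \in up I -> y \in down I -> y \in I.
Proof. move=> /upP[a Ha Hay] /downP[b Hb Hyb]; exact: (ICP _ HI a b). Qed.

Lemma CP c : c \in C -> [/\ c \in up I, c \notin I & forall y, y \in up I -> y \notin I -> ~~ (y < c)].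
Proof.
move=> /MinP[]; rewrite in_setD => /andP[cI cU] H; split=> // y yU yI.
by apply: H; rewrite in_setD yI yU.
Qed.

Lemma CE c : c \in up I -> c \notin I -> (forall y, y \in up I -> y \notin I -> ~~ (y < c)) -> c \in C.
Proof.
move=> cU cI H; rewrite /C /ceil MinE in_setD cI cU /=; apply/forallP => y.
by apply/implyP; rewrite in_setD => /andP[yI yU]; apply: H.
Qed.

Lemma MinI_eq m y : m \in Min I -> y \in I -> y <= m -> y = m.
Proof.
move=> /MinP[_ H] yI; rewrite le_eqVlt => /orP[/eqP//|ym].
by move: (H y yI); rewrite ym.
Qed.

Lemma C_in_Jp c : c \in C -> c \in Jp.
Proof. move=> Hc; case/CP: (Hc) => cU cI _; by rewrite JpE (negbTE cI) cU. Qed.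

Lemma Jp_up_downC b : b \in Jp -> b \in up I -> b \in down C.
Proof.
rewrite JpE; case: ifP => [_ /andP[//]|bI]; move=> Hb bU; rewrite bU in Hb.
by apply/downP; exists b.
Qed.

Lemma Jp_upnotI b : b \in Jp -> b \in up I -> b \notin I -> b \in C.
Proof. by move=> H1 H2 H3; rewrite JpE (negbTE H3) H2 in H1. Qed.


Lemma up_trans S y w : y \in up S -> y <= w -> w \in up S.
Proof. move=> /upP[a aS ay] yw; apply/upP; exists a => //; exact: le_trans yw. Qed.
Lemma down_trans S y w : w \in down S -> y <= w -> y \in down S.
Proof. move=> /downP[a aS wa] yw; apply/downP; exists a => //; exact: le_trans wa. Qed.

Lemma upnotI_below_Jp z b : z \in up I -> z \notin I -> b \in Jp -> z < b -> False.
Proof.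
move=> zU zI bJ zb; have bU := up_trans zU (ltW zb).
case: (boolP (b \in I)) => bI.
  case/upP: zU => a aI az; by rewrite (ICP _ HI a b z aI bI az (ltW zb)) in zI.
case/CP: (Jp_upnotI bJ bU bI) => _ _ H; by move: (H z zU zI); rewrite zb.
Qed.

Lemma P1 x : x \in I -> (x \in Jp) = [exists a, exists b, [&& a \in I, a < x, b \in Jp & x < b]].
Proof.
move=> xI; rewrite JpE xI; apply/idP/idP.
- move=> /andP[/downP[c Hc xc] xM].
  move: xM; rewrite MinE xI /= negb_forall => /existsP[a]; rewrite negb_imply negbK => /andP[aI ax].
  case/CP: (Hc) => _ cI _.
  have cx : x < c by rewrite lt_neqAle xc andbT; apply: contraNneq cI => <-.
  apply/existsP; exists a; apply/existsP; exists c; by rewrite aI ax cx C_in_Jp.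
- move=> /existsP[a /existsP[b /and4P[aI ax bJ xb]]]; apply/andP; split.
  + have bU : b \in up I by apply/upP; exists x => //; exact: ltW.
    exact: down_trans (Jp_up_downC bJ bU) (ltW xb).
  + rewrite MinE xI /= negb_forall; apply/existsP; exists a; by rewrite aI ax.
Qed.

Lemma P2 x : x \notin I -> (x \in Jp) <->
  ((forall a z, a \in I -> a < z -> z < x -> z \in I) /\
   (forall b z, b \in Jp -> x < z -> z < b -> z \in Jp)).
Proof.
move=> xI; rewrite JpE (negbTE xI).
case: ifP => xU.
- split.
  + move=> xC; split.
    * move=> a z aI az zx; apply/negPn/negP => zI.
      have zU : z \in up I by apply/upP; exists a => //; exact: ltW.
      case/CP: xC => _ _ H; by move: (H z zU zI); rewrite zx.
    * move=> b z bJ xz zb; exfalso; apply: (upnotI_below_Jp xU xI bJ); exact: lt_trans xz zb.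
  + move=> [H1 _]; apply: CE => // y yU yI; apply/negP => yx.
    case/upP: yU => a aI; rewrite le_eqVlt => /orP[/eqP E|ay].
      by subst; rewrite aI in yI.
    by rewrite (H1 a y) in yI.
- have noa : forall a z, a \in I -> a < z -> z < x -> False.
    move=> a z aI az zx; have : x \in up I.
      apply/upP; exists a => //; exact: ltW (lt_trans az zx).
    by rewrite xU.
  case: ifP => xD.
  + split.
    * move=> xM; split; first by move=> a z aI az zx; exfalso; exact: noa aI az zx.
      move=> b z bJ xz zb; apply/negPn/negP; rewrite JpE; case: ifP => zI.
      - have zC : z \in down C.
          have bU : b \in up I by apply/upP; exists z => //; exact: ltW.
          exact: down_trans (Jp_up_downC bJ bU) (ltW zb).
        rewrite zC /= negbK => zM; move: xM; apply/negP/negPn.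
        apply/downP; exists z; [by rewrite in_setI zM zC | exact: ltW].
      - case: ifP => zU.
          by move=> _; apply: (upnotI_below_Jp zU (negbT zI) bJ zb).
        case: ifP => zD // ; rewrite negbK => zM; move: xM; apply/negP/negPn.
        exact: down_trans zM (ltW xz).
    * move=> [_ H2]; apply/negP => /downP[m]; rewrite in_setI => /andP[mMin mC] xm.
      case/downP: mC => c cC mc.
      have [mI _] := MinP mMin.
      case/CP: (cC) => _ cI _.
      have xm' : x < m by rewrite lt_neqAle xm andbT; apply: contraNneq xI => ->.
      have mc' : m < c by rewrite lt_neqAle mc andbT; apply: contraNneq cI => <-.
      by have := H2 c m (C_in_Jp cC) xm' mc'; rewrite JpE mI mMin andbF.
  + split => // _; split; first by move=> a z aI az zx; exfalso; exact: noa aI az zx.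
    move=> b z bJ xz zb; rewrite JpE; case: ifP => zI.
      have : x \in down I by apply/downP; exists z => //; exact: ltW.
      by rewrite xD.
    case: ifP => zU; first by exfalso; apply: (upnotI_below_Jp zU (negbT zI) bJ zb).
    case: ifP => zD //.
    have : x \in down I by exact: down_trans zD (ltW xz).
    by rewrite xD.
Qed.


Lemma Jp_eq :
    Inc I
    :|: (down (IncIn I C) :\: (I :|: down C))
    :|: (down C :\: down (Min I :&: down C)) = Jp.
Proof.
apply/setP => y; rewrite JpE /Inc /IncIn !(in_setU, in_setD, in_setC, in_setI).
have yDI : y \in I -> y \in down I by move=> yI; apply/downP; exists y.
case: (boolP (y \in I)) => yI /=.
- rewrite (yDI yI) /= andbC; case: (boolP (y \in down C)) => //= yC.
  congr (~~ _); apply/idP/idP.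
  + move=> /downP[m]; rewrite in_setI => /andP[mM _] ym; by rewrite (MinI_eq mM yI ym).
  + by move=> yM; apply/downP; exists y => //; rewrite in_setI yM yC.
- case: ifP => yU /=.
  + have -> : y \in down (I :&: Inc C) = false.
      apply/negP => /downP[i]; rewrite in_setI => /andP[iI _] yi.
      have iD : i \in down I by apply/downP; exists i.
      by rewrite (updown yU (down_trans iD yi)) in yI.
    rewrite orbT /= andbF /=.
    have -> : y \in down (Min I :&: down C) = false.
      apply/negP => /downP[m]; rewrite in_setI => /andP[mM _] ym.
      have [mI _] := MinP mM.
      have : y \in down I by apply/downP; exists m.
      by move=> yD; rewrite (updown yU yD) in yI.
    apply/idP/idP.
    * move=> /downP[c cC]; rewrite le_eqVlt => /orP[/eqP->//|yc].
      case/CP: cC => _ _ H; by move: (H y yU yI); rewrite yc.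
    * by move=> yC; apply/downP; exists y.
  + case: ifP => yD /=.
    * rewrite -/M; case: (boolP (y \in down M)) => yM /=.
      - rewrite orbF; apply/negbTE/nandP; left; rewrite negbK.
        case/downP: yM => m; rewrite /M in_setI => /andP[_ mC] ym.
        exact: down_trans mC ym.
      - case: (boolP (y \in down C)) => yC; rewrite ?orbT //= orbF.
        case/downP: yD => i iI yi; apply/downP; exists i => //.
        rewrite in_setI iI /= /Inc in_setC !in_setU negb_or; apply/andP; split.
        + by apply: contra yC => iC; exact: down_trans iC yi.
        + apply/negP => /upP[c cC ci]; case/CP: (cC) => cU cI _.
          have iD : i \in down I by apply/downP; exists i.
          by rewrite (updown cU (down_trans iD ci)) in cI.
    * by [].
Qed.

Lemma step T x : interval_closed T ->
  (forall y, x < y -> (y \in T) = (y \in Jp)) ->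
  (forall y, y < x -> (y \in T) = (y \in I)) ->
  (x \in T) = (x \in I) ->
  toggle x T = [set y | if y == x then y \in Jp else y \in T].
Proof.
move=> HT Hup Hdn Hx; rewrite /toggle /symdiff1 Hx.
case: (boolP (x \in I)) => xI.
- have E : [exists a, exists b, [&& a \in T, b \in T, a < x & x < b]] =
           [exists a, exists b, [&& a \in I, a < x, b \in Jp & x < b]].
    apply: eq_existsb => a; apply: eq_existsb => b.
    case: (boolP (a < x)) => ax; case: (boolP (x < b)) => xb; rewrite ?andbF ?andFb //.
    by rewrite (Hdn _ ax) (Hup _ xb) !andbT.
  rewrite (IC_del x HT) E -P1 //.
  case: (boolP (x \in Jp)) => xJ /=; apply/setP => y; rewrite ?in_setD1 in_set;
    case: eqVneq => [->|] //=.
  all: try by rewrite Hx xI xJ.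
  by rewrite (negbTE xJ).
- have E1 : (forall a z, a \in T -> a < z -> z < x -> z \in T) <->
            (forall a z, a \in I -> a < z -> z < x -> z \in I).
    split=> H a z aI az zx.
    + rewrite -(Hdn _ zx); apply: (H a) => //; by rewrite (Hdn _ (lt_trans az zx)).
    + rewrite (Hdn _ zx); apply: (H a) => //; by rewrite -(Hdn _ (lt_trans az zx)).
  have E2 : (forall b z, b \in T -> x < z -> z < b -> z \in T) <->
            (forall b z, b \in Jp -> x < z -> z < b -> z \in Jp).
    split=> H b z bI xz zb.
    + rewrite -(Hup _ xz); apply: (H b) => //; by rewrite (Hup _ (lt_trans xz zb)).
    + rewrite (Hup _ xz); apply: (H b) => //; by rewrite -(Hup _ (lt_trans xz zb)).
  have xI' : x \notin I by [].
  case: (boolP (interval_closed (x |: T))) => H.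
  + have xJ : x \in Jp.
      apply/(P2 xI'); case/(IC_add x HT): H => H1 H2; split; [exact/E1 | exact/E2].
    apply/setP => y; rewrite in_setU1 in_set; case: eqVneq => [->|] //=.
  + have xJ : x \notin Jp.
      apply/negP => /(P2 xI') [H1 H2]; move/negP: H; apply; apply/(IC_add x HT).
      split; [exact/E1 | exact/E2].
    apply/setP => y; rewrite in_set; case: eqVneq => [->|] //=.
    by rewrite Hx (negbTE xI) (negbTE xJ).
Qed.

Lemma main s : linext s -> forall t p, s = p ++ t ->
  foldr toggle I t = [set y | if y \in t then y \in Jp else y \in I] /\
  interval_closed (foldr toggle I t).
Proof.
move=> [Hperm Hidx].
have Hu : uniq s by rewrite (perm_uniq Hperm) enum_uniq.
have Hmem : forall y, y \in s by move=> y; rewrite (perm_mem Hperm) mem_enum.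
elim=> [|x t IH] p Es /=.
  by split => //; apply/setP => y; rewrite in_set.
have Es' : s = rcons p x ++ t by rewrite cat_rcons.
have [E1 IC1] := IH (rcons p x) Es'.
set T := foldr toggle I t in E1 IC1 *.
move: (Hu); rewrite Es cat_uniq => /and3P[_ Hnh /andP[xt _]].
have notp : forall y, y \in x :: t -> y \notin p.
  by move=> y Hy; apply: contra Hnh => yp; apply/hasP; exists y.
have idx_x : index x s = size p.
  by rewrite Es index_cat (negbTE (notp x (mem_head _ _))) /= eqxx addn0.
have up_in : forall y, x < y -> y \in t.
  move=> y xy; have := Hidx _ _ xy; rewrite idx_x Es index_cat; case: ifP => yp.
    by rewrite -index_mem in yp; move=> h; move: (ltn_trans h yp); rewrite ltnn.
  move=> _; have : y \in x :: t by have := Hmem y; rewrite Es mem_cat yp.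
  rewrite in_cons => /orP[/eqP E|//]; by rewrite E ltxx in xy.
have dn_out : forall y, y < x -> y \notin t.
  move=> y yx; apply/negP => yt; have := Hidx _ _ yx.
  rewrite idx_x Es index_cat (negbTE (notp y _)) ?in_cons ?yt ?orbT //.
  by rewrite ltnNge leq_addr.
split.
- apply: etrans (step IC1 _ _ _) _.
  + by move=> y xy; rewrite E1 in_set (up_in y xy).
  + by move=> y yx; rewrite E1 in_set (negbTE (dn_out y yx)).
  + by rewrite E1 in_set (negbTE xt).
  + apply/setP => y; rewrite !in_set E1 in_set in_cons; case: eqVneq => [->|] //=.
- by rewrite /toggle; case: ifP.
Qed.

End J.
End S.

Theorem theorem2p15 (d : Order.disp_t) (P : finPOrderType d)
    (s : seq P) (I : {set P}) :
  linext s -> interval_closed I ->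
  Row s I =
    Inc I
    :|: (down (IncIn I (ceil I)) :\: (I :|: down (ceil I)))
    :|: (down (ceil I) :\: down (Min I :&: down (ceil I))).
Proof.
move=> Hs HI.
have [E _] := main HI Hs (erefl : s = [::] ++ s).
have Hmem : forall y, y \in s.
  by move=> y; case: Hs => Hperm _; rewrite (perm_mem Hperm) mem_enum.
rewrite /Row E; transitivity (Jp I); last by symmetry; exact: (Jp_eq HI).
by apply/setP => y; rewrite in_set Hmem.
Qed.
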